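(* Let $J,M$ be natural numbers. Let $\mathcal N\subset\mathbb N$ be a subset such that for each $m\in\mathbb N$ there is some $n\in\mathcal N$ divisible by $m$. Let $a_{j,i}\in\mathbb Z$ and $b_j\in\mathbb Z$ for $(j,i)\in\{1,\ldots,J\}\times\{1,\ldots,M\}$ be fixed integers. Suppose that for each $n\in\mathcal N$ there are integers $e_{i,n}$, $i\in\{1,\ldots,M\}$, such that $n$ divides $b_j-\sum_{i=1}^M a_{j,i}e_{i,n}$ for each $j\in\{1,\ldots,J\}$. Then there is some $n_0\in\mathcal N$ with the following property: for each $n\in\mathcal N$ divisible by $n_0$, there are integers $e'_{i,n}$, $i\in\{1,\ldots,M\}$, such that $\frac{n}{n_0}$ divides $e_{i,n}-e'_{i,n}$ for each $i$ and $b_j=\sum_{i=1}^M a_{j,i}e'_{i,n}$ for each $j$. *)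

(* Defs.v *)
From mathcomp Require Import all_boot all_order all_algebra.
Set Implicit Arguments. Unset Strict Implicit. Unset Printing Implicit Defensive.

(* Main.v *)
Require Import Defs.
From mathcomp Require Import all_boot all_order all_algebra.
Import GRing.Theory Num.Theory.
Local Open Scope ring_scope.
Lemma dvdmx (p q : nat) (t : int) (B : 'M[int]_(p,q)) (v : 'cV[int]_q) :
  (forall i, (t %| v i ord0)%Z) -> forall k, (t %| (B *m v) k ord0)%Z.
Proof.
move=> H k; rewrite mxE; apply: rpred_sum => i _; exact: dvdz_mull.
Qed.

Lemma diag_in (J M : nat) (d : seq int) (g : 'cV[int]_M) (k : 'I_J) (hk : (k < M)%N) :
  ((\matrix_(i < J, j < M) (d`_i *+ (i == j :> nat))) *m g) k ord0 = d`_k * g (Ordinal hk) ord0.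
Proof.
rewrite mxE (bigD1 (Ordinal hk)) //= big1 ?addr0; first by rewrite mxE eqxx mulr1n.
by move=> i /negbTE ne; rewrite mxE; case: eqP => [h|_]; [ move: ne; rewrite -(inj_eq val_inj) /= h eqxx | rewrite mulr0n mul0r].
Qed.

Lemma diag_out (J M : nat) (d : seq int) (g : 'cV[int]_M) (k : 'I_J) (hk : ~~ (k < M)%N) :
  ((\matrix_(i < J, j < M) (d`_i *+ (i == j :> nat))) *m g) k ord0 = 0.
Proof.
rewrite mxE big1 // => i _; rewrite mxE; case: eqP => [h|_]; last by rewrite mulr0n mul0r.
by move: hk; rewrite h ltn_ord.
Qed.
Theorem lemma10 (J M : nat) (Nset : pred nat)
  (a : 'I_J -> 'I_M -> int) (b : 'I_J -> int) (e : nat -> 'I_M -> int)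
  (hNpos : forall n, Nset n -> (0 < n)%N)
  (hNcof : forall m : nat, (0 < m)%N -> exists2 n, Nset n & (m %| n)%N)
  (he : forall n, Nset n -> forall j : 'I_J,
          (n%:Z %| b j - \sum_(i < M) a j i * e n i)%Z) :
  exists2 n0, Nset n0 &
    forall n, Nset n -> (n0 %| n)%N ->
      exists e' : 'I_M -> int,
        (forall i : 'I_M, ((n %/ n0)%N%:Z %| e n i - e' i)%Z) /\
        (forall j : 'I_J, b j = \sum_(i < M) a j i * e' i).
Proof.
pose A : 'M[int]_(J,M) := \matrix_(j,i) a j i.
have [L uL [R uR [d _ defA]]] := int_Smith_normal_form A.
set D := \matrix_(i, j) _ in defA.
pose bv : 'cV[int]_J := \col_j b j.
pose c := invmx L *m bv.
pose ev n : 'cV[int]_M := \col_i e n i.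
have key1 : forall n, Nset n -> forall k, (n%:Z %| c k ord0 - (D *m (R *m ev n)) k ord0)%Z.
  move=> n hn k.
  have -> : c k ord0 - (D *m (R *m ev n)) k ord0 = (invmx L *m (bv - A *m ev n)) k ord0.
    rewrite mulmxBr defA -!mulmxA (mulKmx uL).
    by rewrite /c !mxE.
  apply: (@dvdmx _ _ n (invmx L) (bv - A *m ev n)) => j; rewrite !mxE.
  under eq_bigr do rewrite !mxE.
  exact: he.
pose F (k : 'I_J) : nat := if (k < M)%N && (d`_k != 0) then absz d`_k else (absz (c k ord0)).+1.
pose N := (\prod_(k < J) F k)%N.
have N0 : (0 < N)%N.
  apply: prodn_gt0 => k; rewrite /F; case: ifP => //; case/andP => _; by rewrite absz_gt0.
have [n0 hn0 Nn0] := hNcof N N0.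
have fdiv : forall k : 'I_J, (F k %| n0)%N.
  move=> k; apply: dvdn_trans Nn0; rewrite /N (bigD1 k) //=; exact: dvdn_mulr.
have Fct1 : forall (k : 'I_J) (hk : (k < M)%N), d`_k != 0 -> (d`_k %| c k ord0)%Z.
  move=> k hk dk; have := key1 n0 hn0 k; rewrite (@diag_in _ _ _ _ _ hk) => h.
  have h2 : (d`_k %| n0%:Z)%Z by rewrite dvdzE /=; have := fdiv k; rewrite /F hk dk.
  have h3 := dvdz_trans h2 h.
  have h4 : (d`_k %| d`_k * (R *m ev n0) (Ordinal hk) ord0)%Z := dvdz_mulr _ (dvdzz _).
  by have := rpredD h3 h4; rewrite subrK.
have Fct2 : forall (k : 'I_J), ~~ ((k < M)%N && (d`_k != 0)) -> c k ord0 = 0.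
  move=> k H.
  have hD : (D *m (R *m ev n0)) k ord0 = 0.
    case: (ltnP k M) => hk.
      rewrite (@diag_in _ _ _ _ _ hk); move: H; rewrite hk /= negbK => /eqP ->; exact: mul0r.
    by rewrite diag_out // -leqNgt.
  have := key1 n0 hn0 k; rewrite hD subr0 dvdzE /= => h.
  have f := fdiv k; rewrite /F (negbTE H) in f.
  have g := dvdn_trans f h.
  apply/eqP; rewrite -absz_eq0; apply/eqP.
  case: (posnP (absz (c k ord0))) => // pos; move: (dvdn_leq pos g); by rewrite ltnn.
exists n0 => // n hn hdiv.
pose t := (n %/ n0)%N.
pose f := R *m ev n.
pose f' : 'cV[int]_M := \col_i (if (insub (val i) : option 'I_J) is Some k then
   (if d`_k != 0 then (c k ord0 %/ d`_k)%Z else f i ord0) else f i ord0).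
have hDf' : D *m f' = c.
  apply/matrixP => k j; rewrite (ord1 j).
  case: (ltnP k M) => hk.
    rewrite (@diag_in _ _ _ _ _ hk) mxE /= valK.
    case: eqP => dk.
      by rewrite dk mul0r Fct2 // dk eqxx andbF.
    by rewrite mulrC divzK //; apply: (Fct1 k hk); apply/eqP.
  by rewrite diag_out ?Fct2 // ?ltnNge ?hk.
have hdiff : forall i, (t%:Z %| f i ord0 - f' i ord0)%Z.
  move=> i; rewrite [f' i ord0]mxE; case: (ltnP i J) => hiJ; last first.
    by rewrite insubF ?subrr ?dvdz0 // ltnNge hiJ.
  rewrite (insubT (fun x => x < J)%N hiJ) /=.
  change (t %| f i ord0 - (if d`_(Ordinal hiJ) != 0 then (c (Ordinal hiJ) ord0 %/ d`_(Ordinal hiJ))%Z else f i ord0))%Z.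
  set k := Ordinal hiJ.
  have ik : val k = val i by [].
  case: ifP => dk; last by rewrite subrr dvdz0.
  have hk : (k < M)%N by rewrite ik ltn_ord.
  have hi : Ordinal hk = i by apply: val_inj.
  have := key1 n hn k; rewrite (@diag_in _ _ _ _ _ hk) hi -/f => h.
  have /dvdzP [q cq] := Fct1 k hk dk.
  rewrite cq in h *; rewrite mulzK //.
  have E : q * d`_k - d`_k * f i ord0 = d`_k * (q - f i ord0) by rewrite mulrBr mulrC.
  rewrite E in h.
  move: h; rewrite !dvdzE abszM /= => h.
  have := fdiv k; rewrite /F hk dk /= => /dvdnP [s hs].
  have hn' : n = (t * s * absz (d`_i)%R)%N by rewrite -mulnA -hs /t divnK.
  rewrite hn' mulnC in h.
  rewrite dvdn_pmul2l ?absz_gt0 // in h.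
  rewrite -opprB abszN; exact: dvdn_trans (dvdn_mulr s (dvdnn t)) h.
pose e' := fun i => (invmx R *m f') i ord0.
exists e'; split.
  move=> i.
  have -> : e n i - e' i = (invmx R *m (f - f')) i ord0.
    by rewrite /e' /f mulmxBr mulKmx // !mxE.
  apply: dvdmx => j.
  have := hdiff j; by rewrite [(f - f') j ord0]mxE [(- f') j ord0]mxE.
move=> j.
have hA : A *m (invmx R *m f') = bv.
  by rewrite defA -!mulmxA (mulmxA R) (mulmxV uR) mul1mx hDf' /c mulmxA (mulmxV uL) mul1mx.
move/matrixP: hA => /(_ j ord0); rewrite [LHS]mxE [RHS]mxE => <-.
by apply: eq_bigr => i _; rewrite mxE.
Qed.
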